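(* Let $A$ be a meet-complemented lattice in which $\Box x$ exists for every $x\in A$, and let $a,b\in A$. Then (i) $\Box(a\wedge b)\le\Box a\wedge\Box b$; (ii) $\Box a\vee\Box b\le\Box(a\vee b)$; (iii) $\Box(a\vee\neg b)\wedge b\le\Box a$; (iv) $\Box(a\vee b)\wedge\neg b\le\Box a$; (v) $\Box a\wedge\Box\neg a=0$; (vi) $\Box 0=0$; (vii) $\Box a=1$ iff $a=1$.
   Context: A meet-complemented lattice is a lattice $(L,\le)$ (not necessarily distributive) such that for every $a\in L$ the element $\neg a=\max\{b\in L: a\wedge b\le c\ \text{for all } c\in L\}$ exists; it is bounded with bottom $0$ and top $1$. For $a\in L$, $\Box a=\max\{b\in L: a\vee\neg b=1\}$. *)

(* Defs.v *)
From HB Require Import structures.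
From mathcomp Require Import all_boot all_order.
Set Implicit Arguments. Unset Strict Implicit. Unset Printing Implicit Defensive.
Import Order.TTheory.
Local Open Scope order_scope.

Definition is_max (d : Order.disp_t) (L : porderType d) (S : L -> Prop) (m : L) : Prop :=
  S m /\ (forall b, S b -> b <= m).

Definition is_meet_compl (d : Order.disp_t) (L : tbLatticeType d) (neg : L -> L) : Prop :=
  forall a : L, is_max (fun b : L => forall c : L, a `&` b <= c) (neg a).

Definition is_box (d : Order.disp_t) (L : tbLatticeType d) (neg box : L -> L) : Prop :=
  forall a : L, is_max (fun b : L => a `|` neg b = \top) (box a).

(* Main.v *)
Require Import Defs.
From HB Require Import structures.
From mathcomp Require Import all_boot all_order.
Import Order.TTheory.
Local Open Scope order_scope.

Section S.
Variables (d : Order.disp_t) (A : tbLatticeType d) (neg box : A -> A).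
Hypothesis Hneg : is_meet_compl neg.
Hypothesis Hbox : is_box neg box.

Lemma negI x : x `&` neg x = \bot.
Proof. by apply/eqP; rewrite -lex0; case: (Hneg x) => H _; exact: H. Qed.

Lemma negP x z : (z <= neg x) <-> (x `&` z <= \bot).
Proof.
split.
  by move=> h; apply: le_trans (leI2 (lexx x) h) _; rewrite negI.
move=> h; case: (Hneg x) => _ H; apply: H => c; exact: le_trans h (le0x c).
Qed.

Lemma galois x z : (z <= neg x) <-> (x <= neg z).
Proof. by split=> /negP h; apply/negP; rewrite meetC. Qed.

Lemma neg_anti x y : x <= y -> neg y <= neg x.
Proof. move=> h; apply/negP; apply: le_trans (leI2 h (lexx _)) _; by rewrite negI. Qed.

Lemma nn x : x <= neg (neg x).
Proof. by apply/galois. Qed.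

Lemma boxU x : x `|` neg (box x) = \top.
Proof. by case: (Hbox x). Qed.

Lemma boxM x b : x `|` neg b = \top -> b <= box x.
Proof. by case: (Hbox x) => _ H; apply: H. Qed.

Lemma keyL x y : x `|` neg y = \top -> y <= neg (neg x).
Proof.
move=> h; apply/galois; apply/negP.
set z := y `&` neg x.
have h1 : x <= neg z by apply/galois; exact: leIr.
have h2 : neg y <= neg z by apply: neg_anti; exact: leIl.
have e : neg z = \top by apply/eqP; rewrite -le1x -h leUx h1 h2.
by rewrite -(negI z) e meetx1.
Qed.

Lemma box_mono x y : x <= y -> box x <= box y.
Proof.
move=> h; apply: boxM; apply/eqP; rewrite -le1x -(boxU x).
by rewrite leUx leUr andbT; apply: le_trans h (leUl _ _).
Qed.

Lemma negT : neg \top = \bot.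
Proof. by rewrite -(negI \top) meet1x. Qed.

Lemma negB : neg \bot = \top.
Proof. by apply/eqP; rewrite -le1x; apply/negP; rewrite meet0x. Qed.

End S.

Theorem proposition2 (d : Order.disp_t) (A : tbLatticeType d) (neg box : A -> A)
  (Hneg : is_meet_compl neg) (Hbox : is_box neg box) (a b : A) :
  (box (a `&` b) <= box a `&` box b) /\
  (box a `|` box b <= box (a `|` b)) /\
  (box (a `|` neg b) `&` b <= box a) /\
  (box (a `|` b) `&` neg b <= box a) /\
  (box a `&` box (neg a) = \bot) /\
  (box \bot = \bot) /\
  (box a = \top <-> a = \top).
Proof.
have M := @box_mono _ _ _ _ Hbox.
have U := @boxU _ _ _ _ Hbox.
have BM := @boxM _ _ _ _ Hbox.
have NA := @neg_anti _ _ _ Hneg.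
have K := @keyL _ _ _ Hneg.
have NN := @nn _ _ _ Hneg.
have NI := @negI _ _ _ Hneg.
split; first by rewrite lexI !M // ?leIl ?leIr.
split; first by rewrite leUx !M // ?leUl ?leUr.
split.
  apply: BM; apply/eqP; rewrite -le1x -(U (a `|` neg b)).
  rewrite leUx; apply/andP; split.
    rewrite leUx leUl /=; apply: le_trans (leUr _ _); apply: NA; exact: leIr.
  apply: le_trans (leUr _ _); apply: NA; exact: leIl.
split.
  apply: BM; apply/eqP; rewrite -le1x -(U (a `|` b)).
  rewrite leUx; apply/andP; split.
    rewrite leUx leUl /=; apply: le_trans (leUr _ _); apply: le_trans (NN b) _; apply: NA; exact: leIr.
  apply: le_trans (leUr _ _); apply: NA; exact: leIl.
have nT := @negT _ _ _ Hneg.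
split.
  apply/eqP; rewrite -lex0.
  have h1 := K _ _ (U a).
  have h2 : box (neg a) <= neg a.
    apply: le_trans (K _ _ (U (neg a))) _; apply: NA; exact: NN a.
  apply: le_trans (leI2 h1 h2) _; by rewrite meetC NI.
split.
  apply/eqP; rewrite -lex0; apply: le_trans (K _ _ (U \bot)) _.
  by rewrite (@negB _ _ _ Hneg) nT.
split.
  by move=> e; have := U a; rewrite e nT joinx0.
move=> ->; apply/eqP; rewrite -le1x; apply: BM; by rewrite join1x.
Qed.
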